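(* For $n = 3$, the Eigenvector Method satisfies invariance to $\alpha$-transformation on a triad; hence a counterexample showing that the Eigenvector Method violates this invariance requires at least $n=4$ alternatives.
   Context: A pairwise comparison matrix of size $n$ is a matrix $\mathbf{A} = [a_{i,j}]$ with positive entries and $a_{j,i} = 1/a_{i,j}$ for all $i,j$. The Eigenvector Method assigns to $\mathbf{A}$ the vector $\mathbf{w}$ with positive entries, $\sum_i w_i = 1$, and $\mathbf{A}\mathbf{w} = \lambda_{\max}\mathbf{w}$, where $\lambda_{\max}$ is the Perron eigenvalue of $\mathbf{A}$. An $\alpha$-transformation on the triad $(i,j,k)$ (three distinct indices), with $\alpha>0$, maps $\mathbf{A}$ to $\hat{\mathbf{A}}$ with $\hat a_{i,j} = \alpha a_{i,j}$, $\hat a_{j,i} = a_{j,i}/\alpha$, $\hat a_{j,k} = \alpha a_{j,k}$, $\hat a_{k,j} = a_{k,j}/\alpha$, $\hat a_{k,i} = \alpha a_{k,i}$, $\hat a_{i,k} = a_{i,k}/\alpha$, all other entries unchanged. A weighting method $f$ is invariant to $\alpha$-transformation on a triad if $f(\mathbf{A}) = f(\hat{\mathbf{A}})$ whenever $\hat{\mathbf{A}}$ arises from $\mathbf{A}$ by such a transformation. (For $n \le 2$ there are no triads, so the invariance holds vacuously.) *)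

(* Defs.v *)
From HB Require Import structures.
From mathcomp Require Import all_boot all_order all_algebra.
From mathcomp Require Import complex.
Set Implicit Arguments. Unset Strict Implicit. Unset Printing Implicit Defensive.
Import Order.TTheory GRing.Theory Num.Theory.
Local Open Scope ring_scope.

Section Defs.
Variable R : rcfType.
Variable n : nat.

Definition is_PCM (A : 'M[R]_n) : Prop :=
  forall i j : 'I_n, 0 < A i j /\ A j i = (A i j)^-1.

Definition is_complex_eigenvalue (A : 'M[R]_n) (mu : R[i]) : Prop :=
  exists v : 'cV[R[i]]_n, v != 0 /\
    (map_mx (fun x : R => x%:C%C) A) *m v = mu *: v.

Definition is_perron_eigenvalue (A : 'M[R]_n) (lam : R) : Prop :=
  is_complex_eigenvalue A lam%:C%C /\
  forall mu : R[i], is_complex_eigenvalue A mu -> `|mu| <= lam%:C%C.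

Definition EM_weights (A : 'M[R]_n) (w : 'cV[R]_n) : Prop :=
  (forall i, 0 < w i 0) /\ \sum_i w i 0 = 1 /\
  exists lam : R, is_perron_eigenvalue A lam /\ A *m w = lam *: w.

Definition alpha_transform (A : 'M[R]_n) (i j k : 'I_n) (alpha : R) : 'M[R]_n :=
  \matrix_(p, q)
    if (p == i) && (q == j) then alpha * A p q
    else if (p == j) && (q == i) then A p q / alpha
    else if (p == j) && (q == k) then alpha * A p q
    else if (p == k) && (q == j) then A p q / alpha
    else if (p == k) && (q == i) then alpha * A p q
    else if (p == i) && (q == k) then A p q / alpha
    else A p q.

End Defs.

(* Main.v *)
Require Import Defs.
From HB Require Import structures.
From mathcomp Require Import all_boot all_order all_algebra.
From mathcomp Require Import complex.
From mathcomp Require Import ring lra zify.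
Import Order.TTheory GRing.Theory Num.Theory.
Local Open Scope ring_scope.

Lemma perron (R : rcfType) (n : nat) (M : 'M[R]_n) (w : 'cV[R]_n) (lam : R) (i0 : 'I_n) :
  (forall p q, 0 <= M p q) -> (forall p, 0 < w p 0) -> M *m w = lam *: w ->
  is_perron_eigenvalue M lam.
Proof.
move=> M0 w0 Ew; split.
  exists (map_mx (fun x : R => x%:C%C) w); split.
    apply/eqP => /matrixP /(_ i0 0); rewrite !mxE => H.
    by move: (w0 i0); rewrite -(ltcR (R:=R)) H ltxx.
  apply/matrixP => p q; rewrite !mxE.
  have := congr1 (fun m : 'M[R]_(n,1) => (m p q)%:C%C) Ew; rewrite /= !mxE rmorphM => <-.
  rewrite rmorph_sum; apply: eq_bigr => r _; rewrite !mxE.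
  by rewrite rmorphM.
move=> mu [v [vnz Ev]].
pose N (q : 'I_n) : R := complex.Re `|v q 0|.
have NE q : `|v q 0| = (N q)%:C%C by rewrite /N RRe_real // normr_real.
have N0 q : 0 <= N q by rewrite -ler0c -NE.
have [p _ Hp] := @arg_maxP _ R 'I_n i0 xpredT (fun q => N q / w q 0) isT.
set c := N p / w p 0 in Hp.
have Nle q : N q <= c * w q 0.
  by rewrite -ler_pdivrMr //; exact: Hp.
have Np : 0 < N p.
  have [q Hq] : exists q, v q 0 != 0.
    apply/existsP; move: vnz; apply: contraR; rewrite negb_exists => /forallP H.
    apply/eqP/matrixP => a b; rewrite !mxE ord1; exact/eqP/negbNE/H.
  have : 0 < N q.
    rewrite lt0r N0 andbT; apply/eqP => Nq; move: Hq; rewrite -normr_eq0 NE Nq.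
    by move/eqP; apply.
  move=> Nq0; have := Hp q isT => /=; rewrite -/c => Hq'.
  have c0 : 0 < c by apply: lt_le_trans Hq'; rewrite divr_gt0.
  have -> : N p = c * w p 0 by rewrite /c divfK // gt_eqF.
  exact: mulr_gt0.
have key : `|mu| * (N p)%:C%C <= lam%:C%C * (N p)%:C%C.
  rewrite -NE -normrM.
  have := congr1 (fun m : 'M[R[i]]_(n,1) => m p 0) Ev; rewrite /= !mxE => <-.
  apply: le_trans (ler_norm_sum _ _ _) _.
  apply: (@le_trans _ _ (\sum_q ((M p q) * (c * w q 0))%:C%C)).
    apply: ler_sum => q _; rewrite !mxE normrM NE ger0_norm ?ler0c //.
    by rewrite -rmorphM lecR ler_wpM2l.
  rewrite -rmorph_sum -rmorphM lecR.
  have := congr1 (fun m : 'M[R]_(n,1) => m p 0) Ew; rewrite /= !mxE => Es.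
  under eq_bigr do rewrite mulrCA.
  rewrite -mulr_sumr Es /c le_eqVlt; apply/orP; left; apply/eqP.
  have -> : N p / w p 0 * (lam * w p 0) = lam * N p.
    by field; rewrite gt_eqF.
  by [].
by rewrite ler_pM2r ?ltcR in key.
Qed.

Lemma circ (R : rcfType) (x y z : R) : 0 < x -> 0 < y -> 0 < z ->
  x + y = x^-1 + z -> x + y = y^-1 + z^-1 -> x * y = 1 /\ z = x.
Proof.
move=> x0 y0 z0 E1 E2.
have E1' : x * z = x * x + x * y - 1.
  transitivity (x * (x^-1 + z) - 1); first by field; rewrite gt_eqF.
  by rewrite -E1; ring.
have E2' : x * y * (x * z) + y * y * (x * z) = x * z + x * y.
  transitivity (x * y * z * (x + y)); first ring.
  by rewrite E2; field; rewrite !gt_eqF.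
rewrite E1' in E2'.
have F : (x * y - 1) * ((x + y - 1) * (x + y + 1)) = 0.
  transitivity ((x * y * (x * x + x * y - 1) + y * y * (x * x + x * y - 1)) -
    (x * x + x * y - 1 + x * y)); first ring.
  by rewrite E2' subrr.
have xy1 : x * y = 1.
  move/eqP: F; rewrite !mulf_eq0 => /orP [/eqP H|/orP [/eqP H|/eqP H]].
  - by lra.
  - have xz0 : 0 < x * z by apply: mulr_gt0.
    have H3 : x * x + x * y = x * (x + y) by ring.
    have H4 : x + y = 1 by lra.
    rewrite H4 in H3; lra.
  - by lra.
split => //.
apply: (mulfI (x := x)); first by rewrite gt_eqF.
by rewrite E1' xy1; ring.
Qed.

Lemma sum3 (R : rcfType) (n : nat) (i j k : 'I_n) (F : 'I_n -> R) :
  i != j -> j != k -> i != k ->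
  (forall p : 'I_n, [|| p == i, p == j | p == k]) ->
  \sum_q F q = F i + F j + F k.
Proof.
move=> hij hjk hik cov.
rewrite (bigD1 i) //= (bigD1 j) /=; last by rewrite eq_sym.
rewrite (bigD1 k) /=; last by rewrite eq_sym hik eq_sym.
rewrite big1 ?addr0 ?addrA // => q /andP [/andP [qi qj] qk].
by move: (cov q); rewrite (negbTE qi) (negbTE qj) (negbTE qk).
Qed.

Lemma cover3 (n : nat) (i j k : 'I_n) : (n <= 3)%N ->
  i != j -> j != k -> i != k -> forall p : 'I_n, [|| p == i, p == j | p == k].
Proof.
move=> hn hij hjk hik p.
move: (ltn_ord p) (ltn_ord i) (ltn_ord j) (ltn_ord k) hij hjk hik.
rewrite -!val_eqE /=.
case: p i j k => [p ?] [i ?] [j ?] [k ?] /=.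
lia.
Qed.

Lemma pcm_transform (R : rcfType) (n : nat) (A : 'M[R]_n) (i j k : 'I_n) (alpha : R) :
  is_PCM A -> i != j -> j != k -> i != k -> 0 < alpha ->
  (forall p : 'I_n, [|| p == i, p == j | p == k]) ->
  is_PCM (alpha_transform A i j k alpha).
Proof.
move=> HA hij hjk hik ha cov.
have hji : j != i by rewrite eq_sym.
have hkj : k != j by rewrite eq_sym.
have hki : k != i by rewrite eq_sym.
have Apos p q : 0 < A p q := (HA p q).1.
have Ainv p q : A q p = (A p q)^-1 := (HA p q).2.
have Adiag p : A p p = 1.
  have := Ainv p p; have := Apos p p; move: (A p p) => x x0 H.
  have : x * x = 1 by rewrite {1}H mulVf ?gt_eqF.
  move=> H2; nra.
move=> p q.
case/or3P: (cov p) => /eqP ->; case/or3P: (cov q) => /eqP ->;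
  rewrite /alpha_transform !mxE !eqxx ?(negbTE hij, negbTE hjk, negbTE hik,
    negbTE hji, negbTE hkj, negbTE hki) /= ?Adiag;
  (split; first by rewrite ?mulr_gt0 ?divr_gt0 ?Apos ?invr_gt0);
  rewrite ?(Ainv i j, Ainv j k, Ainv k i) ?invr1 //;
  by field; rewrite ?gt_eqF ?Apos.
Qed.

Lemma transform_inv (R : rcfType) (n : nat) (A : 'M[R]_n) (i j k : 'I_n) (alpha : R) :
  i != j -> j != k -> i != k -> 0 < alpha ->
  (forall p : 'I_n, [|| p == i, p == j | p == k]) ->
  alpha_transform (alpha_transform A i j k alpha) i j k alpha^-1 = A.
Proof.
move=> hij hjk hik ha cov.
have hji : j != i by rewrite eq_sym.
have hkj : k != j by rewrite eq_sym.
have hki : k != i by rewrite eq_sym.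
apply/matrixP => p q.
case/or3P: (cov p) => /eqP ->; case/or3P: (cov q) => /eqP ->;
  rewrite /alpha_transform !mxE !eqxx ?(negbTE hij, negbTE hjk, negbTE hik,
    negbTE hji, negbTE hkj, negbTE hki) //=;
  by field; rewrite ?gt_eqF.
Qed.

Lemma dir (R : rcfType) (n : nat) (A : 'M[R]_n) (i j k : 'I_n) (alpha : R)
  (w : 'cV[R]_n) (lam : R) :
  is_PCM A -> i != j -> j != k -> i != k -> 0 < alpha ->
  (forall p : 'I_n, [|| p == i, p == j | p == k]) ->
  (forall p, 0 < w p 0) -> A *m w = lam *: w ->
  exists lam', alpha_transform A i j k alpha *m w = lam' *: w.
Proof.
move=> HA hij hjk hik ha cov w0 Ew.
have hji : j != i by rewrite eq_sym.
have hkj : k != j by rewrite eq_sym.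
have hki : k != i by rewrite eq_sym.
have Apos p q : 0 < A p q := (HA p q).1.
have Ainv p q : A q p = (A p q)^-1 := (HA p q).2.
have Adiag p : A p p = 1.
  have := Ainv p p; have := Apos p p; move: (A p p) => x x0 H.
  have : x * x = 1 by rewrite {1}H mulVf ?gt_eqF.
  move=> H2; nra.
have row p : A p i * w i 0 + A p j * w j 0 + A p k * w k 0 = lam * w p 0.
  have := congr1 (fun m : 'M[R]_(n,1) => m p 0) Ew; rewrite /= !mxE => <-.
  by rewrite (@sum3 _ _ i j k _ hij hjk hik cov).
have Ei := row i; have Ej := row j; have Ek := row k.
rewrite ?(Ainv i j, Ainv j k, Ainv k i) !Adiag in Ei Ej Ek.
set a := A i j in Ei Ej Ek *; set c := A j k in Ei Ej Ek *; set d := A k i in Ei Ej Ek *.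
set wi := w i 0 in Ei Ej Ek *; set wj := w j 0 in Ei Ej Ek *; set wk := w k 0 in Ei Ej Ek *.
have a0 : 0 < a by apply: Apos.
have c0 : 0 < c by apply: Apos.
have d0 : 0 < d by apply: Apos.
have wi0 : 0 < wi by apply: w0.
have wj0 : 0 < wj by apply: w0.
have wk0 : 0 < wk by apply: w0.
pose x := a * wj / wi; pose y := wk / (d * wi); pose z := c * wk / wj.
have Li : lam = 1 + x + y.
  apply: (mulIf (x := wi)); first by rewrite gt_eqF.
  by rewrite -Ei /x /y; field; rewrite !gt_eqF.
have Lj : lam = x^-1 + 1 + z.
  apply: (mulIf (x := wj)); first by rewrite gt_eqF.
  by rewrite -Ej /x /z; field; rewrite !gt_eqF.
have Lk : lam = y^-1 + z^-1 + 1.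
  apply: (mulIf (x := wk)); first by rewrite gt_eqF.
  by rewrite -Ek /y /z; field; rewrite !gt_eqF.
have [xy1 zx] : x * y = 1 /\ z = x.
  apply: circ.
  - by rewrite /x divr_gt0 ?mulr_gt0.
  - by rewrite /y divr_gt0 ?mulr_gt0.
  - by rewrite /z divr_gt0 ?mulr_gt0.
  - by apply: (addrI 1); rewrite addrA -Li Lj; ring.
  - by apply: (addrI 1); rewrite addrA -Li Lk; ring.
have hd : d = a * wj * wk / (wi * wi).
  move: xy1; rewrite /x /y => H.
  apply: (mulfI (x := wk / (d * wi))); first by rewrite gt_eqF ?divr_gt0 ?mulr_gt0.
  by rewrite -[LHS]mulr1 -H; field; rewrite !gt_eqF.
have hc : c = a * wj * wj / (wi * wk).
  move: zx; rewrite /x /z => H.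
  apply: (mulIf (x := wk / wj)); first by rewrite gt_eqF ?divr_gt0.
  by rewrite [LHS]mulrA H; field; rewrite !gt_eqF.
exists (1 + alpha * x + (alpha * x)^-1).
apply/matrixP => p q; rewrite ord1 !mxE (@sum3 _ _ i j k _ hij hjk hik cov).
case/or3P: (cov p) => /eqP ->;
  rewrite /alpha_transform !mxE !eqxx ?(negbTE hij, negbTE hjk, negbTE hik,
    negbTE hji, negbTE hkj, negbTE hki) /= ?Adiag ?(Ainv i j, Ainv j k, Ainv k i);
  rewrite -?[A j k]/c -?[A k i]/d -?[A i j]/a -?[w i 0]/wi -?[w j 0]/wj -?[w k 0]/wk /x ?hc ?hd;
  by field; rewrite ?gt_eqF.
Qed.

Theorem corollary3p1 (R : rcfType) (n : nat) (A : 'M[R]_n)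
    (i j k : 'I_n) (alpha : R) :
  (n <= 3)%N -> is_PCM A ->
  i != j -> j != k -> i != k -> 0 < alpha ->
  forall w : 'cV[R]_n,
    EM_weights A w <-> EM_weights (alpha_transform A i j k alpha) w.
Proof.
move=> hn HA hij hjk hik ha w.
have cov := @cover3 _ i j k hn hij hjk hik.
have key : forall (B : 'M[R]_n) (al : R), is_PCM B -> 0 < al ->
    EM_weights B w -> EM_weights (alpha_transform B i j k al) w.
  move=> B al HB hal [wpos [wsum [lam [_ Ew]]]].
  have [lam' E'] := @dir _ _ B i j k al w lam HB hij hjk hik hal cov wpos Ew.
  split => //; split => //; exists lam'; split => //.
  apply: (@perron _ _ _ _ _ i) E' => // p q.
  exact: ltW (@pcm_transform _ _ B i j k al HB hij hjk hik hal cov p q).1.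
split; first exact: key.
move=> H.
rewrite -(@transform_inv _ _ A i j k alpha hij hjk hik ha cov).
apply: key => //; last by rewrite invr_gt0.
exact: pcm_transform.
Qed.
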